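(* Let $I$ be a real interval with $[0,1]\subseteq I\subseteq\mathbb{R}_+$ and let $f\colon I^n\to\mathbb{R}$ be nonconstant. The following are equivalent: (i) $f$ is a quasi-Lovász extension and there exists $A\subseteq[n]$ with $f_0(\mathbf{1}_A)\neq0$; (ii) $f$ is comonotonically modular and $f_0$ is weakly homogeneous; (ii') $f$ is invariant under horizontal min-differences and $f_0$ is weakly homogeneous; (iii) there exists a nondecreasing function $\varphi_f\colon I\to\mathbb{R}$ with $\varphi_f(0)=0$ and $\varphi_f(1)=1$ such that $f=L_{f|_{\{0,1\}^n}}\circ\varphi_f$, i.e. $f(\mathbf{x})=L_{f|_{\{0,1\}^n}}(\varphi_f(x_1),\ldots,\varphi_f(x_n))$ for all $\mathbf{x}\in I^n$.
   Context: Notation: $[n]=\{1,\ldots,n\}$; $S_n$ the permutations of $[n]$; $\mathbf{1}_A$ is the indicator tuple of $A\subseteq[n]$, $\mathbf{0}=\mathbf{1}_\varnothing$; for a function $g$, $g_0=g-g(\mathbf{0})$. For $\sigma\in S_n$, $\mathbb{R}^n_\sigma=\{\mathbf{x}: x_{\sigma(1)}\leq\cdots\leq x_{\sigma(n)}\}$, $A^\uparrow_\sigma(i)=\{\sigma(i),\ldots,\sigma(n)\}$, $A^\uparrow_\sigma(n+1)=\varnothing$. The Lovász extension $L_\psi\colon\mathbb{R}^n\to\mathbb{R}$ of $\psi\colon\{0,1\}^n\to\mathbb{R}$ is the function whose restriction to each $\mathbb{R}^n_\sigma$ is the unique affine function agreeing with $\psi$ at the points $\mathbf{1}_{A^\uparrow_\sigma(k)}$,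 $k\in[n+1]$; a Lovász extension is any such $L_\psi$. A quasi-Lovász extension is $f(\mathbf{x})=L(\varphi(x_1),\ldots,\varphi(x_n))$ with $L$ a Lovász extension and $\varphi\colon I\to\mathbb{R}$ nondecreasing, $\varphi(0)=0$. Comonotonic: $\mathbf{x},\mathbf{x}'\in I^n\cap\mathbb{R}^n_\sigma$ for some $\sigma$. Comonotonically modular: $f(\mathbf{x})+f(\mathbf{x}')=f(\mathbf{x}\wedge\mathbf{x}')+f(\mathbf{x}\vee\mathbf{x}')$ for comonotonic $\mathbf{x},\mathbf{x}'$ ($\wedge,\vee$ componentwise). For $c\geq0$, $[\mathbf{x}]_c$ has $i$th component $0$ if $x_i\leq c$ and $x_i$ otherwise, and $\mathbf{x}\wedge c$ has components $\min(x_i,c)$; $f$ is invariant under horizontal min-differences if $f(\mathbf{x})-f(\mathbf{x}\wedge c)=f([\mathbf{x}]_c)-f([\mathbf{x}]_c\wedge c)$ for all $\mathbf{x}\in I^n$, $c\in I$. A function $g\colon I^n\to\mathbb{R}$ ($I\subseteq\mathbb{R}_+$) is weakly homogeneous if there is a nondecreasing $\phi\colon I\to\mathbb{R}$ with $\phi(0)=0$ and $g(x\mathbf{1}_A)=\phi(x)g(\mathbf{1}_A)$ for all $x\in I$, $A\subseteq[n]$. *)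

(* Defs.v *)
From mathcomp Require Import all_boot all_fingroup.
From Stdlib Require Import Reals.
Set Implicit Arguments. Unset Strict Implicit. Unset Printing Implicit Defensive.

Section Defs.
Variable n : nat.
Local Notation vec := ('I_n -> R).

Definition is_interval (I : R -> Prop) : Prop :=
  forall x y z, I x -> I z -> Rle x y -> Rle y z -> I y.

Definition inIn (I : R -> Prop) (x : vec) : Prop := forall i, I (x i).

Definition indic (A : {set 'I_n}) : vec := fun i => if i \in A then 1%R else 0%R.

Definition f0 (g : vec -> R) : vec -> R := fun x => (g x - g (indic set0))%R.

Definition in_cone (s : 'S_n) (x : vec) : Prop :=
  forall i j : 'I_n, (i <= j)%N -> Rle (x (s i)) (x (s j)).

(* A^up_s(k+1) = {s(k+1), ..., s(n)} for k = 0..n (0-based); k = n gives the empty set *)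
Definition Aup (s : 'S_n) (k : 'I_n.+1) : {set 'I_n} :=
  [set s j | j : 'I_n & (k <= j)%N].

Definition affine_fun (c : R) (a : vec) (x : vec) : R :=
  (c + \big[Rplus/0%R]_(i < n) (a i * x i))%R.

(* L is the Lovasz extension of psi : {0,1}^n -> R (identified with set functions
   via A |-> 1_A): on each cone R^n_s, L coincides with an affine function
   agreeing with psi at the points 1_{A^up_s(k)}, k in [n+1]. *)
Definition lovasz_ext_of (psi : {set 'I_n} -> R) (L : vec -> R) : Prop :=
  forall s : 'S_n, exists (c : R) (a : vec),
    (forall x, in_cone s x -> L x = affine_fun c a x) /\
    (forall k : 'I_n.+1, affine_fun c a (indic (Aup s k)) = psi (Aup s k)).

Definition is_lovasz_ext (L : vec -> R) : Prop :=
  exists psi, lovasz_ext_of psi L.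

Definition nondecr_on (I : R -> Prop) (phi : R -> R) : Prop :=
  forall x y, I x -> I y -> Rle x y -> Rle (phi x) (phi y).

Definition quasi_lovasz (I : R -> Prop) (f : vec -> R) : Prop :=
  exists (L : vec -> R) (phi : R -> R),
    is_lovasz_ext L /\ nondecr_on I phi /\ phi 0%R = 0%R /\
    forall x, inIn I x -> f x = L (fun i => phi (x i)).

Definition comonotonic (I : R -> Prop) (x y : vec) : Prop :=
  inIn I x /\ inIn I y /\ exists s : 'S_n, in_cone s x /\ in_cone s y.

Definition vmin (x y : vec) : vec := fun i => Rmin (x i) (y i).
Definition vmax (x y : vec) : vec := fun i => Rmax (x i) (y i).

Definition comonotonically_modular (I : R -> Prop) (f : vec -> R) : Prop :=
  forall x y, comonotonic I x y -> (f x + f y = f (vmin x y) + f (vmax x y))%R.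

Definition cut (x : vec) (c : R) : vec :=
  fun i => if Rle_dec (x i) c then 0%R else x i.
Definition minc (x : vec) (c : R) : vec := fun i => Rmin (x i) c.

Definition inv_horiz_min_diff (I : R -> Prop) (f : vec -> R) : Prop :=
  forall x c, inIn I x -> I c ->
    (f x - f (minc x c) = f (cut x c) - f (minc (cut x c) c))%R.

Definition weakly_homogeneous (I : R -> Prop) (g : vec -> R) : Prop :=
  exists phi : R -> R, nondecr_on I phi /\ phi 0%R = 0%R /\
    forall x (A : {set 'I_n}), I x ->
      g (fun i => x * indic A i)%R = (phi x * g (indic A))%R.

Definition nonconstant_on (I : R -> Prop) (f : vec -> R) : Prop :=
  exists x y, inIn I x /\ inIn I y /\ f x <> f y.

End Defs.

(* Main.v *)
Require Import Defs.
From HB Require Import structures.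
From mathcomp Require Import all_boot all_fingroup.
From Stdlib Require Import Reals Lra FunctionalExtensionality Classical ClassicalEpsilon.
Set Implicit Arguments. Unset Strict Implicit. Unset Printing Implicit Defensive.

Lemma RplusA : associative Rplus. Proof. by move=> a b c; rewrite Rplus_assoc. Qed.
HB.instance Definition _ := Monoid.isComLaw.Build R 0%R Rplus RplusA Rplus_comm Rplus_0_l.

Lemma sort_exists n (x : 'I_n -> R) : exists s : 'S_n, in_cone s x.
Proof.
case: n x => [|n] x.
  by exists 1%g => -[].
pose leT := fun i j : 'I_n.+1 => is_left (Rle_dec (x i) (x j)).
pose l := sort leT (enum 'I_n.+1).
have tot : total leT.
  move=> a b; rewrite /leT; case: Rle_dec => //= h; case: Rle_dec => //= h2.
  exfalso; lra.
have srt : sorted leT l := sort_sorted tot _.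
have pe : perm_eq l (enum 'I_n.+1) := permEl (perm_sort _ _).
have sz : size l = n.+1 by rewrite (perm_size pe) size_enum_ord.
have un : uniq l by rewrite (perm_uniq pe) enum_uniq.
pose g := fun i : 'I_n.+1 => nth ord0 l i.
have ginj : injective g.
  move=> i j /eqP; rewrite /g nth_uniq ?sz // => /eqP; exact: val_inj.
exists (perm ginj) => i j hij; rewrite !permE /g.
have tr : transitive leT.
  move=> a b c; rewrite /leT; do 3 case: Rle_dec => //= ?; lra.
have rf : reflexive leT by move=> a; rewrite /leT; case: Rle_dec => //= h; lra.
have := sorted_leq_nth tr rf ord0 srt; rewrite /leT => /(_ i j).
by rewrite !inE sz !ltn_ord => /(_ isT isT hij); case: Rle_dec.
Qed.


Lemma upset_Aup n (s : 'S_n) (A : {set 'I_n}) :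
  in_cone s (indic A) -> exists k : 'I_n.+1, Aup s k = A.
Proof.
move=> hc.
pose P m := (m == n) || [exists j : 'I_n, (j == m :> nat) && (s j \in A)].
have exP : exists m, P m by exists n; rewrite /P eqxx.
case: (ex_minnP exP) => k Pk mink.
have kn : k < n.+1 by rewrite ltnS; apply: mink; rewrite /P eqxx.
exists (Ordinal kn); apply/setP => y; apply/imsetP/idP.
- case=> j; rewrite inE /= => kj ->.
  move: Pk; rewrite /P; case/orP => [/eqP ek | /existsP [j0 /andP [/eqP ej0 j0A]]].
    by move: (leq_ltn_trans kj (ltn_ord j)); rewrite ek ltnn.
  have := hc j0 j; rewrite ej0 => /(_ kj); rewrite /indic j0A.
  by case: (s j \in A) => // h; exfalso; lra.
- move=> yA; exists ((s^-1)%g y); last by rewrite permKV.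
  rewrite inE /=; apply: mink; rewrite /P; apply/orP; right.
  by apply/existsP; exists ((s^-1)%g y); rewrite eqxx permKV yA.
Qed.

Lemma LI n psi (L : ('I_n -> R) -> R) A :
  lovasz_ext_of psi L -> L (indic A) = psi A.
Proof.
move=> hL; case: (sort_exists (indic A)) => s hs.
case: (hL s) => c [a [h1 h2]].
case: (upset_Aup hs) => k hk.
by rewrite h1 // -hk h2.
Qed.

Lemma sum_scale n (a y : 'I_n -> R) t :
  \big[Rplus/0%R]_(i < n) (a i * (t * y i))%R = (t * \big[Rplus/0%R]_(i < n) (a i * y i))%R.
Proof.
apply: (big_rec2 (fun u v => u = t * v)%R); first by rewrite Rmult_0_r.
by move=> i u v _ ->; ring.
Qed.

Lemma sum_zero n (a : 'I_n -> R) :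
  \big[Rplus/0%R]_(i < n) (a i * 0)%R = 0%R.
Proof.
apply: (big_rec (fun u => u = 0%R)) => // i u _ ->; ring.
Qed.

Lemma indic0 n : indic (@set0 'I_n) = fun _ => 0%R.
Proof. by apply: functional_extensionality => i; rewrite /indic in_set0. Qed.

Lemma LH n psi (L : ('I_n -> R) -> R) A t :
  lovasz_ext_of psi L -> (0 <= t)%R ->
  L (fun i => t * indic A i)%R = (L (indic set0) + t * (L (indic A) - L (indic set0)))%R.
Proof.
move=> hL t0; case: (sort_exists (indic A)) => s hs.
case: (hL s) => c [a [h1 h2]].
rewrite !h1 //.
- rewrite /affine_fun sum_scale indic0 sum_zero; ring.
- by move=> i j; rewrite indic0; lra.
- move=> i j /hs; nra.
Qed.


Ltac rcases := repeat (match goal with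
  | |- context [Rle_dec ?a ?b] => destruct (Rle_dec a b)
  | |- context [Rlt_dec ?a ?b] => destruct (Rlt_dec a b)
  | H : context [Rle_dec ?a ?b] |- _ => destruct (Rle_dec a b)
  | H : context [Rlt_dec ?a ?b] |- _ => destruct (Rlt_dec a b)
  end; simpl in * ); intros.

Lemma Rmin_mono a b c d : (a <= c -> b <= d -> Rmin a b <= Rmin c d)%R.
Proof. rewrite /Rmin; do 2 case: Rle_dec; lra. Qed.
Lemma Rmax_mono a b c d : (a <= c -> b <= d -> Rmax a b <= Rmax c d)%R.
Proof. rewrite /Rmax; do 2 case: Rle_dec; lra. Qed.
Lemma Rmin_in (P : R -> Prop) a b : P a -> P b -> P (Rmin a b).
Proof. by rewrite /Rmin; case: Rle_dec. Qed.
Lemma Rmax_in (P : R -> Prop) a b : P a -> P b -> P (Rmax a b).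
Proof. by rewrite /Rmax; case: Rle_dec. Qed.

Lemma CM_comp n psi (L : ('I_n -> R) -> R) (I : R -> Prop) phi :
  lovasz_ext_of psi L -> nondecr_on I phi ->
  forall x y, comonotonic I x y ->
  (L (fun i => phi (x i)) + L (fun i => phi (y i)) =
   L (fun i => phi (vmin x y i)) + L (fun i => phi (vmax x y i)))%R.
Proof.
move=> hL hphi x y [hx [hy [s [cx cy]]]].
case: (hL s) => c [a [h1 _]].
rewrite !h1.
- rewrite /affine_fun.
  have -> : forall u v u' v' : R, (c + u + (c + v) = c + u' + (c + v') <-> u + v = u' + v')%R
    by move=> *; split; lra.
  rewrite -!big_split; apply: eq_bigr => i _ /=.
  rewrite /vmin /vmax /Rmin /Rmax; case: Rle_dec => _; ring.
- move=> i j hij; apply: hphi; rewrite /vmax;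
    [apply: Rmax_in | apply: Rmax_in | apply: Rmax_mono]; [apply: hx|apply: hy|apply: hx|apply: hy|apply: cx|apply: cy]; done.
- move=> i j hij; apply: hphi; rewrite /vmin;
    [apply: Rmin_in | apply: Rmin_in | apply: Rmin_mono]; [apply: hx|apply: hy|apply: hx|apply: hy|apply: cx|apply: cy]; done.
- by move=> i j hij; apply: hphi; [apply: hy|apply: hy|apply: cy].
- by move=> i j hij; apply: hphi; [apply: hx|apply: hx|apply: cx].
Qed.

Lemma CM_INV n (I : R -> Prop) (h : ('I_n -> R) -> R) :
  (forall x, I x -> 0 <= x)%R -> I 0%R ->
  comonotonically_modular I h -> inv_horiz_min_diff I h.
Proof.
move=> pos I0 hcm x c hx hc.
case: (sort_exists x) => s hs.
have := hcm (minc x c) (cut x c).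
have -> : vmin (minc x c) (cut x c) = minc (cut x c) c.
  apply: functional_extensionality => i.
  rewrite /vmin /minc /cut /Rmin; have := pos _ (hx i); have := pos _ hc.
  rcases; lra.
have -> : vmax (minc x c) (cut x c) = x.
  apply: functional_extensionality => i.
  rewrite /vmax /minc /cut /Rmin /Rmax; have := pos _ (hx i); have := pos _ hc.
  rcases; lra.
have hcut : inIn I (cut x c) by move=> i; rewrite /cut; case: Rle_dec => ? /=; [exact: I0 | exact: hx].
suff hcom : comonotonic I (minc x c) (cut x c) by move/(_ hcom); lra.
split; first by move=> i; apply: Rmin_in.
split => //; exists s; split.
  by move=> i j /hs hij; rewrite /minc; apply: Rmin_mono; lra.
move=> i j /hs hij; rewrite /cut.
have := pos _ (hx (s j)); have := pos _ hc.
rcases; lra.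
Qed.

Lemma min_exists n (y : 'I_n -> R) (P : pred 'I_n) :
  (exists i, P i) -> exists i, P i /\ forall j, P j -> (y i <= y j)%R.
Proof.
move=> [i0 Pi0].
suff : forall l : seq 'I_n, l != [::] -> exists2 i, i \in l & forall j, j \in l -> (y i <= y j)%R.
  move/(_ (filter P (enum 'I_n))).
  have ne : filter P (enum 'I_n) != [::].
    apply/eqP => e; have : i0 \in filter P (enum (ordinal n)) by rewrite mem_filter Pi0 mem_enum.
    by rewrite e.
  case/(_ ne) => i; rewrite mem_filter => /andP [Pi _] hi; exists i; split => // j Pj.
  by apply: hi; rewrite mem_filter Pj mem_enum.
elim=> // a l IH _; case: l IH => [|b l] IH.
  by exists a; rewrite ?inE // => j; rewrite inE => /eqP ->; lra.
case: IH => // i il hi.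
case: (Rle_dec (y a) (y i)) => h.
  exists a; first by rewrite inE eqxx.
  move=> j; rewrite inE => /orP [/eqP -> | /hi]; lra.
exists i; first by rewrite inE il orbT.
move=> j; rewrite inE => /orP [/eqP -> | /hi]; lra.
Qed.

Definition nzs n (y : 'I_n -> R) : {set 'I_n} := [set i | ~~ is_left (Req_EM_T (y i) 0%R)].

Lemma K n (I : R -> Prop) (f g : ('I_n -> R) -> R) :
  (forall x, I x -> 0 <= x)%R -> I 0%R ->
  inv_horiz_min_diff I f -> inv_horiz_min_diff I g ->
  (forall c A, I c -> f (fun i => c * indic A i)%R = g (fun i => c * indic A i)%R) ->
  forall y, inIn I y -> f y = g y.
Proof.
move=> pos I0 hf hg hfg.
suff : forall m y, #|nzs y| <= m -> inIn I y -> f y = g y.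
  by move=> H y; apply: (H _ y (leqnn _)).
elim=> [|m IH] y hm hy.
  have -> : y = (fun i => 0 * indic set0 i)%R; last exact: hfg.
  apply: functional_extensionality => i; rewrite Rmult_0_l.
  move: hm; rewrite leqn0 => /eqP /cards0_eq /setP /(_ i).
  by rewrite /nzs !inE; case: Req_EM_T.
case: (classic (exists i, y i <> 0%R)) => [ex | nex].
2: { have -> : y = (fun i => 0 * indic set0 i)%R; last exact: hfg.
  apply: functional_extensionality => i; rewrite Rmult_0_l.
  by apply: NNPP => h; apply: nex; exists i. }
case: (@min_exists n y (fun i => is_left (Rlt_dec 0 (y i)))).
  case: ex => i hi; exists i; case: Rlt_dec => //= h; have := pos _ (hy i); lra.
move=> i1 [pi1 mi1].
have cpos : (0 < y i1)%R by move: pi1; case: Rlt_dec.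
set c := y i1.
have cpos' : (0 < c)%R by [].
have hc : I c by apply: hy.
have eq1 : minc y c = (fun i => c * indic [set i | is_left (Rlt_dec 0 (y i))] i)%R.
  apply: functional_extensionality => i; rewrite /minc /indic inE.
  have h5 : (0 < y i)%R -> (c <= y i)%R by move=> h; apply: mi1; case: Rlt_dec.
  have := pos _ (hy i); rewrite /Rmin.
  rcases; try lra.
have eq2 : minc (cut y c) c = (fun i => c * indic [set i | is_left (Rlt_dec c (y i))] i)%R.
  apply: functional_extensionality => i; rewrite /minc /cut /indic inE /Rmin.
  have := pos _ (hy i); rcases; lra.
have hcut : inIn I (cut y c) by move=> i; rewrite /cut; case: Rle_dec => ? /=; [exact: I0 | exact: hy].
have Ecut : f (cut y c) = g (cut y c).
  apply: IH => //.
  have : nzs (cut y c) \proper nzs y.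
    apply/properP; split.
      apply/subsetP => i; rewrite /nzs !inE /cut; case: Rle_dec => //= _.
      by case: Req_EM_T.
    exists i1; rewrite /nzs !inE /cut /c; rcases; case: Req_EM_T => //= h0; exfalso; lra.
  by move/proper_card => h; rewrite -ltnS; apply: leq_trans hm.
have := hf y c hy hc; have := hg y c hy hc.
rewrite eq1 eq2 hfg // Ecut (hfg c) //; lra.
Qed.


Lemma tele (g : nat -> R) N k : k <= N ->
  \big[Rplus/0%R]_(i < N) (if (k <= i)%N then (g i - g i.+1)%R else 0%R) = (g k - g N)%R.
Proof.
elim: N => [|N IH] hk.
  by rewrite big_ord0; move: hk; rewrite leqn0 => /eqP ->; ring.
rewrite big_ord_recr /=.
case: (leqP k N) => hkN.
  by rewrite IH //; ring.
have -> : k = N.+1 by apply/eqP; rewrite eqn_leq hk hkN.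
rewrite big1 => [|i _]; last by rewrite leqNgt (leq_trans (ltn_ord i)) ?leqnSn.
ring.
Qed.

Lemma abel (G V U : nat -> R) N :
  U 0 = 0%R -> (forall j, U j.+1 = V j) ->
  \big[Rplus/0%R]_(i < N) ((G i - G i.+1) * V i)%R =
  (\big[Rplus/0%R]_(i < N) (G i * (V i - U i)) - G N * U N)%R.
Proof.
move=> U0 US; elim: N => [|N IH].
  by rewrite !big_ord0 U0; ring.
rewrite !big_ord_recr /= IH US; set S := \big[_/_]_(i < N) _; ring.
Qed.

Lemma card_lt n (i : nat) : #|[set m : 'I_n | m < i]| <= i.
Proof.
rewrite cardE -(size_map val) -[X in _ <= X](size_iota 0).
apply: uniq_leq_size; first by rewrite (map_inj_uniq val_inj) enum_uniq.
move=> m /mapP [k]; rewrite mem_enum inE => ki ->.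
by rewrite mem_iota.
Qed.

Lemma card_le n (i : 'I_n) : i.+1 <= #|[set k : 'I_n | k <= i]|.
Proof.
rewrite cardE -(size_map val) -[X in X <= _](size_iota 0).
apply: uniq_leq_size; first exact: iota_uniq.
move=> m; rewrite mem_iota add0n => /andP [_ mi].
have mn : m < n by apply: leq_trans mi (ltn_ord i).
apply/mapP; exists (Ordinal mn) => //.
by rewrite mem_enum inE.
Qed.

Lemma S2a n (x : 'I_n -> R) (s s' : 'S_n) (i : 'I_n) :
  in_cone s x -> in_cone s' x -> ~ (x (s i) < x (s' i))%R.
Proof.
move=> hs hs' hlt.
pose h := fun k => (s'^-1)%g (s k).
have hinj : injective h by move=> a b; rewrite /h => /perm_inj /perm_inj.
have sub : [set h k | k in [set k : 'I_n | k <= i]] \subset [set m : 'I_n | m < i].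
  apply/subsetP => y /imsetP [k]; rewrite inE => ki ->.
  rewrite inE ltnNge; apply/negP => im.
  have := hs' _ _ im; rewrite /h permKV.
  have := hs _ _ ki; lra.
have := subset_leq_card sub; rewrite card_imset //.
move=> h1; have := leq_trans (card_le i) (leq_trans h1 (card_lt n i)).
by rewrite ltnn.
Qed.

Lemma S2 n (x : 'I_n -> R) (s s' : 'S_n) (i : 'I_n) :
  in_cone s x -> in_cone s' x -> x (s i) = x (s' i).
Proof.
move=> hs hs'; have := S2a hs hs' (i:=i); have := S2a hs' hs (i:=i); lra.
Qed.

Definition Aup' n (s : 'S_n) (k : nat) : {set 'I_n} := [set s j | j : 'I_n & k <= j].

Lemma S3 n (x : 'I_n.+1 -> R) (s : 'S_n.+1) (i : nat) :
  in_cone s x -> i < n.+1 ->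
  (i = 0 \/ (x (s (inord i.-1)) < x (s (inord i)))%R) ->
  Aup' s i = [set j | is_left (Rle_dec (x (s (inord i))) (x j))].
Proof.
move=> hs hi hc; apply/setP => y.
rewrite -(permKV s y) /Aup' mem_imset ?inE; last exact: perm_inj.
set j0 := (s^-1)%g y.
case: Rle_dec => /= hle.
  apply/negPn/negP; rewrite -ltnNge => j0i.
  case: hc => [i0 | hlt]; first by rewrite i0 in j0i.
  have : (inord i.-1 : 'I_n.+1) >= j0.
    by rewrite inordK; [rewrite -ltnS prednK // (leq_ltn_trans _ j0i) | rewrite (leq_ltn_trans (leq_pred _))].
  move/hs; lra.
apply/negP => ij0; apply: hle; apply: hs; by rewrite inordK.
Qed.


Section Constr.
Variable n : nat.
Local Notation N := n.+1.
Variable psi : {set 'I_N} -> R.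

Definition G (s : 'S_N) (k : nat) : R := psi (Aup' s k).
Definition coef (s : 'S_N) : 'I_N -> R :=
  fun j => (G s ((s^-1)%g j) - G s ((s^-1)%g j).+1)%R.

Lemma Aup'N (s : 'S_N) : Aup' s N = set0.
Proof.
apply/setP => y; rewrite inE /Aup'; apply/imsetP => -[j]; rewrite inE => hj _.
by move: (leq_trans hj (ltn_ord j)); rewrite ltnn.
Qed.

Lemma sum_reindex (s : 'S_N) (F : 'I_N -> R) :
  \big[Rplus/0%R]_(j < N) F j = \big[Rplus/0%R]_(i < N) F (s i).
Proof. exact: (reindex_inj (h:=s) (@perm_inj _ s)). Qed.

Lemma coef_vals (s : 'S_N) (k : nat) : k <= N ->
  affine_fun (psi set0) (coef s) (indic (Aup' s k)) = psi (Aup' s k).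
Proof.
move=> hk; rewrite /affine_fun (sum_reindex s).
rewrite (eq_bigr (fun i : 'I_N => if (k <= i)%N then (G s i - G s i.+1)%R else 0%R)).
  by rewrite tele // /G Aup'N; ring.
move=> i _; rewrite /coef permK /indic /Aup' mem_imset ?inE; last exact: perm_inj.
case: (k <= i); ring.
Qed.

Definition Vf (s : 'S_N) (x : 'I_N -> R) (k : nat) : R := x (s (inord k)).
Definition Uf (V : nat -> R) (k : nat) : R := if k is j.+1 then V j else 0%R.

Lemma affine_abel (s : 'S_N) x :
  affine_fun (psi set0) (coef s) x =
  (psi set0 + (\big[Rplus/0%R]_(i < N) (G s i * (Vf s x i - Uf (Vf s x) i)))
   - G s N * Uf (Vf s x) N)%R.
Proof.
rewrite /affine_fun (sum_reindex s).
rewrite (eq_bigr (fun i : 'I_N => ((G s i - G s i.+1) * Vf s x i)%R)).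
  rewrite (@abel _ _ (Uf (Vf s x))) //; set S := \big[_/_]_(i < N) _; ring.
by move=> i _; rewrite /coef /Vf permK inord_val.
Qed.

Lemma Gsame (s s' : 'S_N) x (i : 'I_N) : in_cone s x -> in_cone s' x ->
  Vf s x = Vf s' x ->
  Vf s x i <> Uf (Vf s x) i -> G s i = G s' i.
Proof.
move=> hs hs' eV e.
have hc : forall t : 'S_N, in_cone t x -> Vf t x = Vf s x ->
   (i : nat) = 0 \/ (x (t (inord (i : nat).-1)) < x (t (inord i)))%R.
  move=> t ht et; move: e; rewrite -et /Uf /Vf.
  case: (i : nat) (ltn_ord i) => [|j] ij e; [by left | right] => /=.
  have := ht (inord j) (inord j.+1); rewrite !inordK // ?(ltn_trans _ ij) //.
  move/(_ (leqnSn _)) => h; lra.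
rewrite /G (S3 hs (ltn_ord i) (hc s hs erefl)) (S3 hs' (ltn_ord i) (hc s' hs' (esym eV))).
by have := congr1 (fun V => V (i : nat)) eV; rewrite /Vf => ->.
Qed.

Lemma consistent (s s' : 'S_N) x : in_cone s x -> in_cone s' x ->
  affine_fun (psi set0) (coef s) x = affine_fun (psi set0) (coef s') x.
Proof.
move=> hs hs'.
have eV : Vf s x = Vf s' x.
  by apply: functional_extensionality => k; apply: S2.
rewrite !affine_abel -eV.
have -> : G s N = G s' N by rewrite /G !Aup'N.
congr (_ - _)%R; congr (_ + _)%R.
apply: eq_bigr => i _.
case: (Req_EM_T (Vf s x i) (Uf (Vf s x) i)) => e.
  by rewrite e; ring.
by rewrite (Gsame hs hs' eV e).
Qed.

Definition sigma (x : 'I_N -> R) : 'S_N :=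
  proj1_sig (constructive_indefinite_description _ (sort_exists x)).
Lemma sigmaP x : in_cone (sigma x) x.
Proof. exact: (proj2_sig (constructive_indefinite_description _ (sort_exists x))). Qed.

Definition Lov (x : 'I_N -> R) : R := affine_fun (psi set0) (coef (sigma x)) x.

Lemma Lov_ok : lovasz_ext_of psi Lov.
Proof.
move=> s; exists (psi set0), (coef s); split.
  by move=> x hx; rewrite /Lov (consistent (sigmaP x) hx).
move=> k; rewrite /Aup -/(Aup' s k); apply: coef_vals.
by rewrite -ltnS ltn_ord.
Qed.
End Constr.

Lemma lovasz_exists n (psi : {set 'I_n} -> R) : exists L, lovasz_ext_of psi L.
Proof.
case: n psi => [|n] psi; last by exists (Lov psi); exact: Lov_ok.
exists (fun _ => psi set0) => s; exists (psi set0), (fun _ => 0%R); split.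
  by move=> x _; rewrite /affine_fun big_ord0 Rplus_0_r.
move=> k; rewrite /affine_fun big_ord0 Rplus_0_r.
by have -> : Aup s k = set0 by apply/setP => -[].
Qed.


Lemma CM_f n (I : R -> Prop) psi (L : ('I_n -> R) -> R) phi f :
  lovasz_ext_of psi L -> nondecr_on I phi ->
  (forall x, inIn I x -> f x = L (fun i => phi (x i))) ->
  comonotonically_modular I f.
Proof.
move=> hL hphi hf x y hxy; have [hx [hy _]] := hxy.
rewrite !hf //; first exact: (CM_comp hL hphi hxy).
- by move=> i; apply: Rmax_in; [apply: hx | apply: hy].
- by move=> i; apply: Rmin_in; [apply: hx | apply: hy].
Qed.

Lemma phi_indic n (phi : R -> R) c (B : {set 'I_n}) : phi 0%R = 0%R ->
  (fun i => phi (c * indic B i)%R) = (fun i => phi c * indic B i)%R.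
Proof.
move=> phi0; apply: functional_extensionality => i; rewrite /indic.
by case: (i \in B); rewrite ?Rmult_1_r ?Rmult_0_r.
Qed.

Lemma inIn_cind n (I : R -> Prop) c (B : {set 'I_n}) : I c -> I 0%R ->
  inIn I (fun i => c * indic B i)%R.
Proof. by move=> hc h0 i; rewrite /indic; case: (i \in B); rewrite ?Rmult_1_r ?Rmult_0_r. Qed.

Lemma one_indic n (B : {set 'I_n}) : (fun i => 1 * indic B i)%R = indic B.
Proof. by apply: functional_extensionality => i; rewrite Rmult_1_l. Qed.

Lemma LHphi n (I : R -> Prop) psi (L : ('I_n -> R) -> R) phi c B :
  lovasz_ext_of psi L -> nondecr_on I phi -> phi 0%R = 0%R -> I 0%R ->
  (forall x, I x -> 0 <= x)%R -> I c ->
  L (fun i => phi (c * indic B i)%R) = (L (indic set0) + phi c * (L (indic B) - L (indic set0)))%R.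
Proof.
move=> hL hphi phi0 I0 pos hc.
rewrite phi_indic //; apply: LH hL _.
by rewrite -phi0; apply: hphi => //; apply: pos.
Qed.

Theorem theorem14 (n : nat) (I : R -> Prop) (f : ('I_n -> R) -> R) :
  is_interval I ->
  (forall x, Rle 0 x -> Rle x 1 -> I x) ->
  (forall x, I x -> Rle 0 x) ->
  nonconstant_on I f ->
  let cond_i := quasi_lovasz I f /\ exists A : {set 'I_n}, f0 f (indic A) <> 0%R in
  let cond_ii := comonotonically_modular I f /\ weakly_homogeneous I (f0 f) in
  let cond_ii' := inv_horiz_min_diff I f /\ weakly_homogeneous I (f0 f) in
  let cond_iii := exists phi : R -> R,
      nondecr_on I phi /\ phi 0%R = 0%R /\ phi 1%R = 1%R /\
      exists L, lovasz_ext_of (fun A => f (indic A)) L /\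
        forall x, inIn I x -> f x = L (fun i => phi (x i)) in
  (cond_i <-> cond_ii) /\ (cond_i <-> cond_ii') /\ (cond_i <-> cond_iii).
Proof.
move=> Iint I01 pos [xa [xb [hxa [hxb hne]]]] ci cii cii' ciii.
have I0 : I 0%R by apply: I01; lra.
have I1 : I 1%R by apply: I01; lra.
have const : inv_horiz_min_diff I f ->
    (forall c B, I c -> f (fun i => c * indic B i)%R = f (indic set0)) -> False.
  move=> hi h; apply: hne.
  have hg : inv_horiz_min_diff I (fun _ : 'I_n -> R => f (indic set0)) by move=> *; ring.
  by rewrite (K pos I0 hi hg h hxa) (K pos I0 hi hg h hxb).
have phipos : forall phi, nondecr_on I phi -> phi 0%R = 0%R -> forall c, I c -> (0 <= phi c)%R.
  by move=> phi hphi phi0 c hc; rewrite -phi0; apply: hphi => //; apply: pos.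
have i_ii : ci -> cii.
  move=> [[L [phi [[psi' hL] [hphi [phi0 hf]]]]] [A hA]].
  have fL1 : forall c B, I c -> f (fun i => c * indic B i)%R =
      (L (indic set0) + phi c * (L (indic B) - L (indic set0)))%R.
    by move=> c B hc; rewrite hf; [apply: (LHphi (I:=I)) | apply: inIn_cind].
  have fB : forall B, f (indic B) = (L (indic set0) + phi 1 * (L (indic B) - L (indic set0)))%R.
    by move=> B; rewrite -fL1 // one_indic.
  have f0B : forall B, f0 f (indic B) = (phi 1 * (L (indic B) - L (indic set0)))%R.
    by move=> B; rewrite /f0 !fB; ring.
  have p1 : phi 1%R <> 0%R by move=> e; apply: hA; rewrite f0B e; ring.
  split; first exact: (CM_f hL hphi hf).
  exists (fun c => phi c / phi 1)%R; split; [|split].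
  - move=> x y hx hy hxy; rewrite /Rdiv; apply: Rmult_le_compat_r; last exact: hphi.
    by left; apply: Rinv_0_lt_compat; have := phipos _ hphi phi0 _ I1; lra.
  - by rewrite phi0 /Rdiv Rmult_0_l.
  - move=> x B hx; rewrite f0B /f0 fL1 // fB; field; exact: p1.
have ii_ii' : cii -> cii'.
  by move=> [hcm hwh]; split => //; exact: CM_INV pos I0 hcm.
have ii'_iii : cii' -> ciii.
  move=> [hinv [phi [hphi [phi0 hwh]]]].
  have fwh : forall c B, I c -> f (fun i => c * indic B i)%R =
      (f (indic set0) + phi c * (f (indic B) - f (indic set0)))%R.
    by move=> c B hc; have := hwh c B hc; rewrite /f0; lra.
  have [A hA] : exists A, f0 f (indic A) <> 0%R.
    apply: NNPP => hn; apply: (const hinv) => c B hc; rewrite fwh //.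
    have : f0 f (indic B) = 0%R by apply: NNPP => h; apply: hn; exists B.
    rewrite /f0 => ->; ring.
  have p1 : phi 1%R = 1%R.
    have := hwh 1%R A I1; rewrite one_indic => e.
    apply: (Rmult_eq_reg_r (f0 f (indic A))) => //; lra.
  have [L hL] := lovasz_exists (fun A => f (indic A)).
  exists phi; do 3 (split => //); exists L; split => //.
  have hg : inv_horiz_min_diff I (fun x => L (fun i => phi (x i))).
    apply: CM_INV pos I0 _; exact: (CM_f hL hphi (f := fun x => L (fun i => phi (x i)))).
  apply: (K pos I0 hinv hg) => c B hc.
  by rewrite fwh // (LHphi (I:=I) (phi:=phi) (c:=c) B hL) // !(LI _ hL).
have iii_i : ciii -> ci.
  move=> [phi [hphi [phi0 [phi1 [L [hL hf]]]]]].
  split; first by exists L, phi; split; [exists (fun A => f (indic A)) | ].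
  apply: NNPP => hn; apply: (const (CM_INV pos I0 (CM_f hL hphi hf))) => c B hc.
  rewrite hf; last by apply: inIn_cind.
  rewrite (LHphi (I:=I) (phi:=phi) (c:=c) B hL) // !(LI _ hL).
  have : f0 f (indic B) = 0%R by apply: NNPP => h; apply: hn; exists B.
  rewrite /f0 => ->; ring.
split; [|split]; split; tauto.
Qed.
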